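(* For every positive integer $n$ and every pseudo-composition $\alpha$ of $n$, the type $B$ ribbon number $r^B_\alpha$ is odd; equivalently $c^B_{2,0}(n)=0$ and $c^B_{2,1}(n)=2^n$.
   Context: A signed permutation of $[n]$ is a bijection $w$ of $\{\pm1,\ldots,\pm n\}$ with $w(-i)=-w(i)$; these form $\mathfrak{S}^B_n$. With $w(0):=0$, $D(w)=\{i\in\{0,\ldots,n-1\}: w(i)>w(i+1)\}$. A pseudo-composition of $n$ ($\alpha\models_0 n$) is a sequence $(\alpha_1,\ldots,\alpha_\ell)$ of integers with $\alpha_1\ge0$, $\alpha_2,\ldots,\alpha_\ell>0$ and sum $n$, with $D(\alpha)=\{\alpha_1,\alpha_1+\alpha_2,\ldots,\alpha_1+\cdots+\alpha_{\ell-1}\}$. Then $r^B_\alpha=|\{w\in\mathfrak{S}^B_n: D(w)=D(\alpha)\}|$ and $c^B_{p,i}(n)=|\{\alpha\models_0 n: r^B_\alpha\equiv i\pmod p\}|$. There are $2^n$ pseudo-compositions of $n$. *)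

(* Defs.v *)
From mathcomp Require Import all_boot all_order ssralg ssrnum ssrint perm.
Set Implicit Arguments. Unset Strict Implicit. Unset Printing Implicit Defensive.
Import GRing.Theory Num.Theory.

(* The signed alphabet {±1,...,±n}: the pair (i, b) with i : 'I_n encodes
   the integer -(i+1) if b = true and +(i+1) if b = false. *)
Definition sidx (n : nat) := ('I_n * bool)%type.

Definition sval (n : nat) (x : sidx n) : int :=
  if x.2 then (- Posz x.1.+1)%R else Posz x.1.+1.

Definition sneg (n : nat) (x : sidx n) : sidx n := (x.1, ~~ x.2).

Definition signed_perm (n : nat) (w : {perm sidx n}) : bool :=
  [forall x : sidx n, w (sneg x) == sneg (w x)].

(* w(k) as an integer for k in {0,...,n}, with w(0) := 0 *)
Definition wval (n : nat) (w : {perm sidx n}) (k : nat) : int :=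
  if k is k'.+1 then
    (if insub k' : option 'I_n is Some i then sval (w (i, false)) else 0%R)
  else 0%R.

Definition descB (n : nat) (w : {perm sidx n}) : {set 'I_n} :=
  [set i : 'I_n | (wval w i.+1 < wval w i)%R].

Definition pseudo_comp (n : nat) (a : seq nat) : bool :=
  [&& 0 < size a, all (fun x => 0 < x) (behead a) & sumn a == n].

(* D(alpha) = {a_1, a_1+a_2, ..., a_1+...+a_{l-1}} as a subset of {0..n-1} *)
Definition descC (n : nat) (a : seq nat) : {set 'I_n} :=
  [set i : 'I_n | val i \in [seq sumn (take k a) | k <- iota 1 (size a).-1]].

Definition rB (n : nat) (a : seq nat) : nat :=
  #|[set w : {perm sidx n} | signed_perm w & descB w == descC n a]|.

Fixpoint seqs_of (m k : nat) : seq (seq nat) :=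
  if k is k'.+1 then [seq x :: s | x <- iota 0 m, s <- seqs_of m k'] else [:: [::]].

(* A duplicate-free finite list containing every pseudo-composition of n:
   all sequences of length 1..n+1 with entries in {0..n}. *)
Definition pc_candidates (n : nat) : seq (seq nat) :=
  flatten [seq seqs_of n.+1 k | k <- iota 1 n.+1].

Definition cB (p i n : nat) : nat :=
  count (fun a => pseudo_comp n a && (rB n a == i %[mod p])) (pc_candidates n).

(* Main.v *)
Require Import Defs.
From mathcomp Require Import all_boot all_order ssralg ssrnum ssrint perm.
From mathcomp Require Import zify.
Set Implicit Arguments. Unset Strict Implicit. Unset Printing Implicit Defensive.
Import GRing.Theory Num.Theory.
Lemma count_pairs (P : pred (seq nat)) (xs : seq nat) (L : seq (seq nat)) :
  count P [seq x :: s | x <- xs, s <- L] = \sum_(x <- xs) count (fun s => P (x :: s)) L.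
Proof.
elim: xs => [|x xs IH]; first by rewrite big_nil.
by rewrite /= count_cat big_cons IH count_map.
Qed.

Definition posall (s : seq nat) := all (fun x => 0 < x) s.
Definition E m l t := count (fun s => posall s && (sumn s == t)) (seqs_of m l).
Definition F m L t := \sum_(l < L) E m l t.
Definition G t := if t is t'.+1 then 2 ^ t' else 1.

Lemma E0 m t : E m 0 t = (t == 0).
Proof. by rewrite /E /=; case: t. Qed.

Lemma ES m l t : E m l.+1 t = \sum_(0 <= x < m | 0 < x <= t) E m l (t - x).
Proof.
rewrite /E /= count_pairs /index_iota subn0 [RHS]big_mkcond /=.
apply: eq_bigr => x _; case: ifP => hx.
  apply: eq_count => s /=; rewrite /posall /=.
  case/andP: hx => -> hxt /=; congr (_ && _); apply/eqP/eqP; lia.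
rewrite -(count_pred0 (seqs_of m l)); apply: eq_count => s /=.
rewrite /posall /=; apply/negbTE/negP => /andP[/andP[h1 _] /eqP h2].
by move/negP: hx; apply; apply/andP; split => //; lia.
Qed.

Lemma G_sum t : G t = (t == 0) + \sum_(0 <= y < t) G y.
Proof.
elim: t => [|t IH]; first by rewrite big_geq.
rewrite big_nat_recr //= add0n.
case: t IH => [|t] IH; first by rewrite big_geq.
rewrite add0n in IH; rewrite -IH /= expnS; lia.
Qed.

Lemma F_G m L t : t < m -> t < L -> F m L t = G t.
Proof.
elim/ltn_ind: t L => t IH L tm tL.
case: L tL => [|L] // tL.
rewrite /F big_ord_recl E0 /= G_sum; congr (_ + _).
under eq_bigr do rewrite ES.
rewrite exchange_big /=.
transitivity (\sum_(0 <= x < m | 0 < x <= t) G (t - x)).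
  apply: eq_bigr => x /andP[x0 xt]; rewrite -(IH _ _ L); try lia.
  by rewrite /F.
rewrite (eq_bigl (fun x => (0 < x) && (x < t.+1))); last by move=> x; lia.
rewrite -(big_nat_widen 0 t.+1 m) //.
rewrite big_mkcond big_nat_recl //= add0n.
rewrite (big_nat_rev _ _ 0 t) /=.
apply: eq_big_nat => y /andP[_ yt]; rewrite add0n; congr G; lia.
Qed.

Lemma seqs_ofS m k : seqs_of m k.+1 = [seq x :: s | x <- iota 0 m, s <- seqs_of m k].
Proof. by []. Qed.

Lemma count_pc n : count (pseudo_comp n) (pc_candidates n) = 2 ^ n.
Proof.
rewrite /pc_candidates count_flatten -map_comp sumnE big_map.
have -> : iota 1 n.+1 = index_iota 1 n.+2 by rewrite /index_iota subSS subn0.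
rewrite big_add1 succnK.
transitivity (\sum_(0 <= l < n.+1) \sum_(0 <= x < n.+1) E n.+1 l (n - x)).
  apply: eq_bigr => l _; rewrite /comp seqs_ofS count_pairs /index_iota subn0.
  apply: eq_big_seq => x; rewrite mem_iota => /andP[_ xn].
  apply: eq_count => s /=; rewrite /pseudo_comp /posall /=.
  congr (_ && _); apply/eqP/eqP; lia.
rewrite exchange_big /=.
transitivity (\sum_(0 <= x < n.+1) G (n - x)).
  apply: eq_big_nat => x /andP[_ xn]; rewrite -(F_G (m := n.+1) (L := n.+1)); try lia.
  by rewrite /F big_mkord.
rewrite (big_nat_rev _ _ 0 n.+1) /=.
have -> : 2 ^ n = G n.+1 by [].
rewrite G_sum add0n; apply: eq_big_nat => y /andP[_ yn]; congr G; lia.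
Qed.

Local Open Scope ring_scope.
Local Notation sval := Defs.sval.

Lemma flip_lt (a b c : int) (ca cb : bool) :
  (ca -> `|a| = c /\ c < `|b|) -> (cb -> `|b| = c /\ c < `|a|) ->
  ((if ca then - a else a) < (if cb then - b else b)) = (a < b).
Proof.
case: ca; case: cb => h1 h2 //.
- have [] := h1 isT; have [] := h2 isT; lia.
- have [] := h1 isT; lia.
- have [] := h2 isT; lia.
Qed.

Local Open Scope nat_scope.
Lemma odd_invol (T : finType) (f : T -> T) (A : {set T}) :
  {in A, forall x, f x \in A} -> {in A, forall x, f (f x) = x} ->
  odd #|A| = odd #|[set x in A | f x == x]|.
Proof.
move: {2}#|A| (leqnn #|A|) => k; elim: k A => [|k IH] A hk fA fK.
  have A0 : A = set0 by apply: cards0_eq; lia.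
  by rewrite A0 cards0 (_ : [set x in set0 | f x == x] = set0) ?cards0 //;
     apply/setP=> x; rewrite !inE.
case: (pickP [pred x in A | f x != x]) => [x /andP[xA fx] | none]; last first.
  suff -> : [set x in A | f x == x] = A by [].
  apply/setP=> x; rewrite inE; case xA: (x \in A) => //=.
  by have := none x; rewrite /= xA /= => /negbFE ->.
have fxA := fA x xA.
set A' := A :\ x :\ f x.
have cA : #|A| = #|A'|.+2.
  rewrite (cardsD1 x A) xA (cardsD1 (f x) (A :\ x)) !inE fx fxA; rewrite /A' /=; lia.
have hA' : {in A', forall y, f y \in A'}.
  move=> y; rewrite !inE => /and3P[yfx yx yA]; rewrite fA // andbT.
  apply/andP; split.
    by apply: contra yx => /eqP e; rewrite -(fK y yA) e fK.
  by apply: contra yfx => /eqP e; rewrite -(fK y yA) e.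
have hK' : {in A', forall y, f (f y) = y}.
  by move=> y; rewrite !inE => /and3P[_ _ yA]; apply: fK.
have := IH A' _ hA' hK'; rewrite cA /= negbK => ->; last by lia.
congr (odd #|pred_of_set _|); apply/setP=> y; rewrite !inE.
case yA: (y \in A); rewrite ?andbF //=.
case fy: (f y == y); rewrite ?andbF ?andbT //.
have ex : y != x by apply: contraNneq fx => ex; rewrite -ex (eqP fy).
rewrite ex andbT; apply: contraNneq fx => ey.
by rewrite -ey -(fK x xA) -ey (eqP fy).
Qed.
Local Open Scope ring_scope.

Section Inv.
Variable n : nat.
Implicit Types (w : {perm sidx n}) (i j : 'I_n) (x y : sidx n).

Definition fixi w i := (w (i, false)).1 == i.
Definition flip i : {perm sidx n} := tperm (i, false) (i, true).
Definition good w i := ~~ fixi w i && [forall j : 'I_n, (j < i)%N ==> fixi w j].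
Definition invol w := if [pick i | good w i] is Some i then (w * flip i)%g else w.

Lemma flipE i y : flip i y = if y.1 == i then sneg y else y.
Proof.
case: y => m b /=; rewrite /flip /sneg /=; case: eqP => [->|ne].
  by case: b; rewrite ?tpermL ?tpermR.
by rewrite tpermD // -pair_eqE /= negb_and; apply/orP; left; apply/eqP => e; apply: ne.
Qed.

Lemma flip1 i y : (flip i y).1 = y.1.
Proof. by rewrite flipE; case: ifP. Qed.

Lemma signedP w : signed_perm w -> forall x, w (sneg x) = sneg (w x).
Proof. by move/forallP => h x; apply/eqP. Qed.

Lemma snegK : involutive (@sneg n).
Proof. by case=> m b; rewrite /sneg /= negbK. Qed.

Lemma same_abs w x y : signed_perm w -> (w x).1 = (w y).1 -> x.1 = y.1.
Proof.
move=> sw e.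
case: (boolP ((w x).2 == (w y).2)) => [/eqP e2|ne2].
  have : w x = w y by apply/eqP; rewrite -pair_eqE /= e e2 !eqxx.
  by move/perm_inj ->.
have : w y = w (sneg x).
  rewrite signedP //; apply/eqP; rewrite -pair_eqE /= e eqxx /=.
  by move: ne2; case: (w x).2; case: (w y).2.
by move/perm_inj ->.
Qed.

Lemma signed_flip w i : signed_perm w -> signed_perm (w * flip i)%g.
Proof.
move=> sw; apply/forallP => x; rewrite !permM signedP // !flipE /=.
by case: ifP.
Qed.

Lemma good_flip w i j : good (w * flip i)%g j = good w j.
Proof.
have h k : fixi (w * flip i)%g k = fixi w k by rewrite /fixi permM flip1.
rewrite /good h; congr (_ && _); apply: eq_forallb => k; by rewrite h.
Qed.

Lemma flip_flip i : (flip i * flip i)%g = 1%g.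
Proof. by apply/permP => x; rewrite permM /flip tpermK perm1. Qed.

Lemma invol_invol w : invol (invol w) = w.
Proof.
rewrite {2}/invol; case E: [pick j | good w j] => [i|]; rewrite /invol ?E //.
have -> : [pick j | good (w * flip i)%g j] = [pick j | good w j].
  by apply: eq_pick => j; rewrite /= good_flip.
by rewrite E -mulgA flip_flip mulg1.
Qed.

Lemma svalN x : sval (sneg x) = - sval x.
Proof. by case: x => m b; rewrite /sval /sneg /=; case: b; rewrite ?opprK. Qed.

Lemma normsval x : `|sval x| = (x.1).+1%:Z.
Proof. by case: x => m b; rewrite /sval /=; case: b; rewrite ?normrN. Qed.

Lemma wval_nat w q (hq : (q < n)%N) : wval w q.+1 = sval (w (Ordinal hq, false)).
Proof. by rewrite /wval (insubT (fun k => k < n)%N hq). Qed.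

Lemma wval_ord w (p : 'I_n) : wval w p.+1 = sval (w (p, false)).
Proof. by rewrite (wval_nat w (ltn_ord p)); congr (sval (w (_, _))); apply: val_inj. Qed.

Lemma wval_flip w i (p : 'I_n) :
  wval (w * flip i)%g p.+1 = if (w (p, false)).1 == i then - wval w p.+1 else wval w p.+1.
Proof. by rewrite !wval_ord permM flipE; case: ifP; rewrite ?svalN. Qed.

Lemma good_gt w i k : good w i -> (w (k, false)).1 = i -> (i < k)%N.
Proof.
case/andP=> ni /forallP h e; case: (ltngtP i k) => // c.
  by move: (h k); rewrite c /= /fixi e => /eqP ik; move: c; rewrite ik ltnn.
by move: e; rewrite -(val_inj c) => e; move: ni; rewrite /fixi e eqxx.
Qed.

Lemma good_adj w i k k' : signed_perm w -> good w i -> (w (k, false)).1 = i ->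
  k' != k -> (i <= k')%N -> (i < (w (k', false)).1)%N.
Proof.
move=> sw gi e nk ik'; case/andP: gi => ni /forallP h.
set m := (w (k', false)).1.
case: (ltngtP i m) => // c.
  have fm : (w (m, false)).1 = m by apply/eqP; move: (h m); rewrite c.
  have := same_abs sw (x := (k', false)) (y := (m, false)); rewrite fm => /(_ erefl) /= km.
  by move: c ik'; rewrite -km; case: leqP.
have := same_abs sw (x := (k', false)) (y := (k, false)); rewrite e (val_inj c) => /(_ erefl) /= kk.
by move: nk; rewrite kk eqxx.
Qed.

Lemma descB_flip w i : signed_perm w -> good w i -> descB (w * flip i)%g = descB w.
Proof.
move=> sw gi; apply/setP => p; rewrite !inE wval_flip.
case hp: (nat_of_ord p) => [|q].
  rewrite /= [X in if X then _ else _](_ : _ = false) //.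
  by apply/negbTE/negP => /eqP /(good_gt gi); rewrite hp.
have hq : (q < n)%N by move: (ltn_ord p); rewrite hp; apply: ltnW.
rewrite !(wval_nat _ hq) -hp !wval_ord permM flipE.
rewrite [sval (if _ then _ else _)]fun_if svalN.
apply: (flip_lt (c := (i.+1)%:Z)); rewrite !normsval.
- move=> /eqP e; rewrite e; split => //.
  have := good_adj (k := p) (k' := Ordinal hq) sw gi e.
  rewrite -val_eqE /= hp => h; have := good_gt gi e; rewrite hp => ik.
  by rewrite ltz_nat; apply: h; lia.
- move=> /eqP e; rewrite e; split => //.
  have := good_adj (k := Ordinal hq) (k' := p) sw gi e.
  rewrite -val_eqE /= hp => h; have := good_gt gi e => /= ik.
  by rewrite ltz_nat; apply: h; lia.
Qed.

Lemma invol_signed w : signed_perm w -> signed_perm (invol w).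
Proof. by rewrite /invol; case: pickP => // i _; apply: signed_flip. Qed.

Lemma invol_descB w : signed_perm w -> descB (invol w) = descB w.
Proof. by rewrite /invol; case: pickP => // i gi sw; apply: descB_flip. Qed.

Lemma invol_fix w : invol w = w -> forall j, fixi w j.
Proof.
rewrite /invol; case: pickP => [i gi e|none _].
  have := congr1 (fun s : {perm sidx n} => s (w^-1%g (i, false))) e.
  by rewrite /= permM permKV /flip tpermL.
have h : forall k (j : 'I_n), (j < k)%N -> fixi w j.
  elim => [//|k IH] j jk; have := none j; rewrite /good.
  move/nandP => [/negPn //|/forallPn [j']]; rewrite negb_imply => /andP[jj' nf].
  by move: nf; rewrite IH //; apply: leq_trans jj' _.
by move=> j; apply: (h j.+1).
Qed.

Lemma desc_fix w (p : 'I_n) : (forall j, fixi w j) -> (p \in descB w) = (w (p, false)).2.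
Proof.
move=> fw; rewrite inE wval_ord.
have hb : `|wval w p| <= p%:Z.
  case hp: (nat_of_ord p) => [|q]; first by rewrite /wval normr0.
  have hq : (q < n)%N by move: (ltn_ord p); rewrite hp; apply: ltnW.
  by rewrite (wval_nat _ hq) normsval (eqP (fw _)).
have := fw p; rewrite /fixi => /eqP; case: (w (p, false)) => m b /= e.
by rewrite /sval /= e; case: b; lia.
Qed.

Lemma fix_unique w1 w2 : signed_perm w1 -> signed_perm w2 ->
  (forall j, fixi w1 j) -> (forall j, fixi w2 j) -> descB w1 = descB w2 -> w1 = w2.
Proof.
move=> s1 s2 f1 f2 d.
have h m : w1 (m, false) = w2 (m, false).
  apply/eqP; rewrite -pair_eqE /= (eqP (f1 m)) (eqP (f2 m)) eqxx /=.
  by rewrite -!desc_fix // d.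
apply/permP => [[m b]]; case: b; last exact: h.
by rewrite -[(m, true)]/(sneg (m, false)) !signedP // h.
Qed.

Definition gS (S : {set 'I_n}) (x : sidx n) : sidx n := (x.1, x.2 (+) (x.1 \in S)).
Lemma gSK S : involutive (gS S).
Proof. by case=> m b; rewrite /gS /= addbK. Qed.
Definition wS S : {perm sidx n} := perm (inv_inj (gSK S)).

Lemma wS_signed S : signed_perm (wS S).
Proof. by apply/forallP => [[m b]]; rewrite !permE /gS /sneg /= addNb. Qed.

Lemma wS_fix S j : fixi (wS S) j.
Proof. by rewrite /fixi permE. Qed.

Lemma wS_desc S : descB (wS S) = S.
Proof. by apply/setP => p; rewrite desc_fix ?permE //; apply: wS_fix. Qed.

Lemma odd_count S : odd #|[set w : {perm sidx n} | signed_perm w & descB w == S]|.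
Proof.
set A := [set w : {perm sidx n} | _ & _].
rewrite (@odd_invol _ invol A).
- suff -> : [set x in A | invol x == x] = [set wS S] by rewrite cards1.
  apply/setP => w; rewrite !inE; apply/idP/idP.
    case/andP => /andP[sw /eqP dw] /eqP iw.
    apply/eqP; apply: fix_unique => //; rewrite ?wS_signed ?wS_desc //.
      exact: invol_fix.
    exact: wS_fix.
  move/eqP ->; rewrite wS_signed wS_desc eqxx /=.
  by rewrite /invol; case: pickP => // i /andP[/negP []]; rewrite wS_fix.
- by move=> w; rewrite !inE => /andP[sw dw]; rewrite invol_signed // invol_descB.
- by move=> w _; apply: invol_invol.
Qed.
End Inv.

Close Scope ring_scope.
Local Open Scope nat_scope.

Theorem corollary4p2 (n : nat) (hn : 0 < n) :
  (forall a : seq nat, pseudo_comp n a -> odd (rB n a)) /\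
  cB 2 0 n = 0 /\ cB 2 1 n = 2 ^ n.
Proof.
have od : forall a, odd (rB n a) by move=> a; apply: odd_count.
split; first by move=> a _; apply: od.
split.
  rewrite /cB; apply/eqP; rewrite eqn0Ngt -has_count; apply/hasPn => a _ /=.
  by rewrite modn2 od andbF.
rewrite /cB -count_pc; apply: eq_count => a /=.
by rewrite modn2 od andbT.
Qed.
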